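(* A brace $B$ is weakly supersoluble if and only if it is supersoluble.
   Context: A brace (skew left brace) is a set $B$ with two binary operations $+$ and $\cdot$ such that $(B,+)$ and $(B,\cdot)$ are groups and $a(b+c)=ab-a+ac$ for all $a,b,c\in B$. $\lambda_a(b)=-a+ab$ defines a homomorphism $\lambda\colon(B,\cdot)\to\operatorname{Aut}(B,+)$. An ideal is a subset that is a subgroup of both groups, normal in both, and invariant under all $\lambda_b$; quotients by ideals are braces. $\operatorname{Soc}(B)=\operatorname{Ker}\lambda\cap Z(B,+)$. $B$ is supersoluble if there is a finite chain of ideals $\{0\}=I_0\le\dots\le I_n=B$ such that for each $i$, either $(I_{i+1}/I_i,+)$ is infinite cyclic and $I_{i+1}/I_i\le\operatorname{Soc}(B/I_i)$, or $I_{i+1}/I_i$ has prime order. $B$ is weakly supersoluble if there is a finite chain of ideals $\{0\}=I_0\le\dots\le I_n=B$ such that for each $i$, either $(I_{i+1}/I_i,+)$ is an infinite cyclic subgroup contained in the centre of $(B/I_i,+)$, or $I_{i+1}/I_i$ has prime order. *)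

(* Defs.v *)
From Stdlib Require Import ZArith Znumtheory List.
Import ListNotations.
Set Implicit Arguments.

Record brace := Brace {
  car :> Type;
  badd : car -> car -> car;
  bzero : car;
  bopp : car -> car;
  bmul : car -> car -> car;
  bone : car;
  binv : car -> car;
  baddA : forall a b c, badd a (badd b c) = badd (badd a b) c;
  badd0l : forall a, badd bzero a = a;
  badd0r : forall a, badd a bzero = a;
  baddNl : forall a, badd (bopp a) a = bzero;
  baddNr : forall a, badd a (bopp a) = bzero;
  bmulA : forall a b c, bmul a (bmul b c) = bmul (bmul a b) c;
  bmul1l : forall a, bmul bone a = a;
  bmul1r : forall a, bmul a bone = a;
  bmulVl : forall a, bmul (binv a) a = bone;
  bmulVr : forall a, bmul a (binv a) = bone;
  brace_law : forall a b c,
    bmul a (badd b c) = badd (badd (bmul a b) (bopp a)) (bmul a c)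
}.

Section BraceDefs.
Variable B : brace.
Local Notation "x + y" := (@badd B x y).
Local Notation "- x" := (@bopp B x).
Local Notation "x * y" := (@bmul B x y).

Definition lambda (a b : B) : B := - a + a * b.

Fixpoint natmul (n : nat) (g : B) : B :=
  match n with O => bzero B | S m => g + natmul m g end.
Definition zmul (k : Z) (g : B) : B :=
  match k with
  | Z0 => bzero B
  | Zpos p => natmul (Pos.to_nat p) g
  | Zneg p => - natmul (Pos.to_nat p) g
  end.

Definition subset_of (I J : B -> Prop) := forall x, I x -> J x.

Definition is_ideal (I : B -> Prop) : Prop :=
  I (bzero B) /\ (forall x y, I x -> I y -> I (x + y)) /\ (forall x, I x -> I (- x)) /\
  I (bone B) /\ (forall x y, I x -> I y -> I (x * y)) /\ (forall x, I x -> I (@binv B x)) /\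
  (forall b x, I x -> I (b + x + - b)) /\
  (forall b x, I x -> I (b * x * @binv B b)) /\
  (forall b x, I x -> I (lambda b x)).

(* x and y lie in the same (additive) coset of I, i.e. [x] = [y] in B/I. *)
Definition cong (I : B -> Prop) (x y : B) : Prop := I (- y + x).

(* (J/I, +) is infinite cyclic (J, I subsets with I <= J):
   cyclic: generated by the class of one element g of J;
   infinite: no finite list of elements represents all classes of J/I. *)
Definition quot_infinite_cyclic (I J : B -> Prop) : Prop :=
  (exists g, J g /\ forall x, J x -> exists k : Z, cong I x (zmul k g)) /\
  ~ (exists s : list B, forall x, J x -> exists y, In y s /\ cong I x y).

(* J/I has prime order: there is a list of representatives of J/I,
   pairwise in distinct classes, covering all classes, of prime length. *)
Definition quot_prime_order (I J : B -> Prop) : Prop :=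
  exists s : list B,
    prime (Z.of_nat (length s)) /\
    (forall y, In y s -> J y) /\
    ForallOrdPairs (fun a b => ~ cong I a b) s /\
    (forall x, J x -> exists y, In y s /\ cong I x y).

Definition quot_central (I J : B -> Prop) : Prop :=
  forall x b, J x -> cong I (x + b) (b + x).

(* J/I is contained in Soc(B/I) = Ker lambda cap Z(B/I,+). *)
Definition quot_in_socle (I J : B -> Prop) : Prop :=
  (forall x b, J x -> cong I (lambda x b) b) /\ quot_central I J.

Definition ideal_chain (n : nat) (I : nat -> B -> Prop) : Prop :=
  (forall x, I 0%nat x <-> x = bzero B) /\
  (forall x, I n x) /\
  (forall i, (i <= n)%nat -> is_ideal (I i)) /\
  (forall i, (i < n)%nat -> subset_of (I i) (I (S i))).

Definition supersoluble : Prop :=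
  exists (n : nat) (I : nat -> B -> Prop), ideal_chain n I /\
    forall i, (i < n)%nat ->
      (quot_infinite_cyclic (I i) (I (S i)) /\ quot_in_socle (I i) (I (S i)))
      \/ quot_prime_order (I i) (I (S i)).

Definition weakly_supersoluble : Prop :=
  exists (n : nat) (I : nat -> B -> Prop), ideal_chain n I /\
    forall i, (i < n)%nat ->
      (quot_infinite_cyclic (I i) (I (S i)) /\ quot_central (I i) (I (S i)))
      \/ quot_prime_order (I i) (I (S i)).

End BraceDefs.

(* Main.v *)
Require Import Defs.
From Stdlib Require Import ZArith Znumtheory List Lia Setoid Morphisms.
Import ListNotations.
Declare Scope br_scope.
Set Implicit Arguments.
Unset Strict Implicit.

Section Basics.
Variable B : brace.

Local Notation "x + y" := (@badd B x y) : br_scope.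
Local Notation "- x" := (@bopp B x) : br_scope.
Local Notation "x * y" := (@bmul B x y) : br_scope.
Local Notation "0" := (@bzero B) : br_scope.
Local Open Scope br_scope.
Local Notation lam := (@lambda B).
Local Notation inv := (@binv B).
Local Notation nm := (@natmul B).
Local Notation zm := (@zmul B).

Lemma addKl (a b : B) : - a + (a + b) = b.
Proof. rewrite baddA, baddNl, badd0l; reflexivity. Qed.
Lemma addNKl (a b : B) : a + (- a + b) = b.
Proof. rewrite baddA, baddNr, badd0l; reflexivity. Qed.
Lemma addKr (a b : B) : a + b + - b = a.
Proof. rewrite <- baddA, baddNr, badd0r; reflexivity. Qed.
Lemma addNKr (a b : B) : a + - b + b = a.
Proof. rewrite <- baddA, baddNl, badd0r; reflexivity. Qed.
Lemma add_inv_uniq (a b : B) : a + b = 0 -> b = - a.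
Proof. intro H. rewrite <- (addKl a b), H, badd0r; reflexivity. Qed.
Lemma oppK (a : B) : - - a = a.
Proof. symmetry; apply add_inv_uniq, baddNl. Qed.
Lemma opp0 : - (bzero B) = 0.
Proof. symmetry; apply add_inv_uniq, badd0l. Qed.
Lemma opp_add (a b : B) : - (a + b) = - b + - a.
Proof. symmetry; apply add_inv_uniq.
  rewrite <- baddA, (baddA B b), baddNr, badd0l, baddNr; reflexivity. Qed.
Lemma addIl (a b c : B) : a + b = a + c -> b = c.
Proof. intro H. rewrite <- (addKl a b), H, addKl; reflexivity. Qed.

Lemma mul0r (a : B) : a * 0 = a.
Proof.
  pose proof (brace_law B a 0 0) as H. rewrite badd0l in H.
  rewrite <- (badd0r B (a * 0)) in H at 1. rewrite <- baddA in H.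
  apply addIl in H. symmetry in H. apply (f_equal (fun x => a + x)) in H.
  rewrite addNKl, badd0r in H. exact H.
Qed.
Lemma one0 : bone B = 0.
Proof. rewrite <- (mul0r (bone B)), bmul1l; reflexivity. Qed.
Lemma mul0l (a : B) : 0 * a = a.
Proof. rewrite <- one0; apply bmul1l. Qed.
Lemma mulE (a b : B) : a * b = a + lam a b.
Proof. unfold lambda. rewrite addNKl; reflexivity. Qed.
Lemma lam_add (a b c : B) : lam a (b + c) = lam a b + lam a c.
Proof. unfold lambda. rewrite brace_law, !baddA; reflexivity. Qed.
Lemma lam0 (a : B) : lam a 0 = 0.
Proof. unfold lambda. rewrite mul0r, baddNl; reflexivity. Qed.
Lemma lam_opp (a b : B) : lam a (- b) = - lam a b.
Proof. apply add_inv_uniq. rewrite <- lam_add, baddNr, lam0; reflexivity. Qed.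
Lemma lam_mul (a b c : B) : lam (a * b) c = lam a (lam b c).
Proof.
  assert (H : a * (b * c) = a*b + (-a + a * lam b c)).
  { rewrite (mulE b c), brace_law, !baddA; reflexivity. }
  unfold lambda at 1. rewrite <- bmulA, H, addKl. reflexivity.
Qed.
Lemma lam_id0 (b : B) : lam 0 b = b.
Proof. unfold lambda. rewrite opp0, badd0l, mul0l; reflexivity. Qed.
Lemma lam_inv_l (a b : B) : lam (inv a) (lam a b) = b.
Proof. rewrite <- lam_mul, bmulVl, one0, lam_id0; reflexivity. Qed.
Lemma lam_inv_r (a b : B) : lam a (lam (inv a) b) = b.
Proof. rewrite <- lam_mul, bmulVr, one0, lam_id0; reflexivity. Qed.
Lemma mul_inv_uniq (a b : B) : a * b = bone B -> b = inv a.
Proof. intro H. rewrite <- (bmul1l B b), <- (bmulVl B a), <- bmulA, H, bmul1r; reflexivity. Qed.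
Lemma invK (a : B) : inv (inv a) = a.
Proof. symmetry; apply mul_inv_uniq, bmulVl. Qed.
Lemma inv_mul (a b : B) : inv (a * b) = inv b * inv a.
Proof. symmetry; apply mul_inv_uniq.
  rewrite <- bmulA, (bmulA B b), bmulVr, bmul1l, bmulVr; reflexivity. Qed.

Lemma natmul_comm (n : nat) (g : B) : nm n g + g = g + nm n g.
Proof. induction n; simpl. rewrite badd0l, badd0r; auto.
  rewrite <- baddA, IHn, baddA; reflexivity. Qed.
Lemma natmul_add (m n : nat) (g : B) : nm (m + n) g = nm m g + nm n g.
Proof. induction m; simpl. rewrite badd0l; auto. rewrite IHm, baddA; auto. Qed.

Lemma zmul_succ (k : Z) (g : B) : zm (Z.succ k) g = g + zm k g.
Proof.
  destruct k as [|p|p].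
  - simpl. rewrite badd0r; reflexivity.
  - simpl. rewrite Pos2Nat.inj_add. simpl. rewrite Nat.add_1_r. simpl. reflexivity.
  - destruct (Pos.succ_pred_or p) as [->|<-].
    + simpl. rewrite badd0r, baddNr; reflexivity.
    + set (q := Pos.pred p).
      replace (Z.succ (Z.neg (Pos.succ q))) with (Z.neg q) by lia.
      unfold zmul. rewrite Pos2Nat.inj_succ. simpl.
      rewrite <- natmul_comm, opp_add, baddA, baddNr, badd0l. reflexivity.
Qed.

Lemma zmul_pred (k : Z) (g : B) : zm (Z.pred k) g = - g + zm k g.
Proof. rewrite <- (Z.succ_pred k) at 2. rewrite zmul_succ, addKl; reflexivity. Qed.
Lemma zmul0 (g : B) : zm 0%Z g = 0.
Proof. reflexivity. Qed.
Lemma zmul1 (g : B) : zm 1%Z g = g.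
Proof. simpl. apply badd0r. Qed.
Lemma zmul_add (a b : Z) (g : B) : zm (a + b)%Z g = zm a g + zm b g.
Proof.
  induction a using Z.peano_ind.
  - simpl. rewrite badd0l; reflexivity.
  - rewrite Z.add_succ_l, !zmul_succ, IHa, baddA; reflexivity.
  - rewrite Z.add_pred_l, !zmul_pred, IHa, baddA; reflexivity.
Qed.
Lemma zmul_opp (a : Z) (g : B) : zm (- a)%Z g = - zm a g.
Proof. apply add_inv_uniq. rewrite <- zmul_add, Z.add_opp_diag_r; reflexivity. Qed.
Lemma zmul_comm (a b : Z) (g : B) : zm a g + zm b g = zm b g + zm a g.
Proof. rewrite <- !zmul_add, Z.add_comm; reflexivity. Qed.
Lemma zmul_mul (a b : Z) (g : B) : zm (a * b)%Z g = zm a (zm b g).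
Proof.
  induction a using Z.peano_ind.
  - reflexivity.
  - rewrite Z.mul_succ_l, Z.add_comm, zmul_add, zmul_succ, IHa; reflexivity.
  - rewrite Z.mul_pred_l, <- Z.add_opp_r, Z.add_comm, zmul_add, zmul_pred, zmul_opp, IHa; reflexivity.
Qed.
Lemma zmul_x0 (k : Z) : zm k (bzero B) = 0.
Proof.
  assert (H : forall n, nm n (bzero B) = 0) by (induction n; simpl; [reflexivity| rewrite IHn, badd0l; reflexivity]).
  destruct k; simpl; rewrite ?H, ?opp0; reflexivity.
Qed.
Lemma lam_zmul (x y : B) (k : Z) : lam x (zm k y) = zm k (lam x y).
Proof.
  assert (H : forall n, lam x (nm n y) = nm n (lam x y)) by
    (induction n; simpl; [apply lam0| rewrite lam_add, IHn; reflexivity]).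
  destruct k; simpl; rewrite ?lam_opp, ?H; auto using lam0.
Qed.

End Basics.

Section Cong.
Variable B : brace.
Local Notation "x + y" := (@badd B x y) : br_scope.
Local Notation "- x" := (@bopp B x) : br_scope.
Local Notation "x * y" := (@bmul B x y) : br_scope.
Local Notation "0" := (@bzero B) : br_scope.
Local Open Scope br_scope.
Local Notation lam := (@lambda B).
Local Notation inv := (@binv B).
Local Notation nm := (@natmul B).
Local Notation zm := (@zmul B).
Variable I : B -> Prop.
Hypothesis HI : is_ideal B I.
Local Notation "x ≡ y" := (cong B I x y) (at level 70).

Lemma I0 : I 0. Proof. apply HI. Qed.
Lemma Iadd x y : I x -> I y -> I (x + y). Proof. apply HI. Qed.
Lemma Iopp x : I x -> I (- x). Proof. apply HI. Qed.
Lemma Imul x y : I x -> I y -> I (x * y). Proof. apply HI. Qed.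
Lemma Iinv x : I x -> I (inv x). Proof. apply HI. Qed.
Lemma Inadd b x : I x -> I (b + x + - b). Proof. apply HI. Qed.
Lemma Inmul b x : I x -> I (b * x * inv b). Proof. apply HI. Qed.
Lemma Ilam b x : I x -> I (lam b x). Proof. apply HI. Qed.

Lemma cong0 x : x ≡ 0 <-> I x.
Proof. unfold cong. rewrite opp0, badd0l. tauto. Qed.

Global Instance cong_Equiv : Equivalence (cong B I).
Proof.
  split.
  - intro x. unfold cong. rewrite baddNl. apply I0.
  - intros x y H. unfold cong in *. apply Iopp in H. rewrite opp_add, oppK in H. exact H.
  - intros x y z H1 H2. unfold cong in *.
    rewrite <- (addNKl y x), baddA. apply Iadd; auto.
Qed.

Global Instance cong_add_Proper : Proper (cong B I ==> cong B I ==> cong B I) (@badd B).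
Proof.
  intros x x' Hx y y' Hy. unfold cong in *.
  rewrite opp_add, <- baddA, (baddA B (- x')).
  replace (- y' + (- x' + x + y)) with ((- y' + (- x' + x) + - - y') + (- y' + y)).
  - apply Iadd; auto. apply Inadd; auto.
  - rewrite oppK, <- !baddA, addNKl. reflexivity.
Qed.

Global Instance cong_opp_Proper : Proper (cong B I ==> cong B I) (@bopp B).
Proof.
  intros x x' Hx. unfold cong in *. rewrite oppK.
  apply Iopp in Hx. rewrite opp_add, oppK in Hx.
  apply (@Inadd x) in Hx. rewrite baddA, baddNr, badd0l in Hx. exact Hx.
Qed.

Lemma lam_cong_r b x y : x ≡ y -> lam b x ≡ lam b y.
Proof.
  unfold cong. intro H. rewrite <- lam_opp, <- lam_add. apply Ilam; auto.
Qed.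

Lemma lam_I j b : I j -> lam j b ≡ b.
Proof.
  intro Hj.
  set (j' := inv b * j * inv (inv b)).
  assert (Hj' : I j') by (apply Inmul; auto).
  assert (E : j * b = b * j').
  { unfold j'. rewrite invK, !bmulA, bmulVr, bmul1l. reflexivity. }
  rewrite !mulE in E.
  assert (E2 : lam j b = - j + (b + lam b j')) by (rewrite <- E, addKl; reflexivity).
  unfold cong. rewrite E2, !baddA.
  apply Iadd; [| apply Ilam; auto].
  pose proof (@Inadd (- b) (- j) (Iopp Hj)) as H. rewrite oppK in H. exact H.
Qed.

Lemma mul_cong_r b x y : x ≡ y -> b * x ≡ b * y.
Proof. intro H. rewrite !mulE. apply cong_add_Proper; [reflexivity| apply lam_cong_r; auto]. Qed.

Lemma lam_cong_l x y b : x ≡ y -> lam x b ≡ lam y b.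
Proof.
  intro H.
  set (j := inv x * y).
  assert (Hj : I j).
  { apply cong0. unfold j. transitivity (inv x * x). apply mul_cong_r. symmetry; exact H. rewrite bmulVl, one0. reflexivity. }
  assert (E : y = x * j) by (unfold j; rewrite bmulA, bmulVr, bmul1l; reflexivity).
  rewrite E, lam_mul. apply lam_cong_r. symmetry. apply lam_I; auto.
Qed.

Global Instance lam_Proper : Proper (cong B I ==> cong B I ==> cong B I) lam.
Proof.
  intros x x' Hx y y' Hy. transitivity (lam x y'). apply lam_cong_r; auto. apply lam_cong_l; auto.
Qed.

Global Instance mul_Proper : Proper (cong B I ==> cong B I ==> cong B I) (@bmul B).
Proof.
  intros x x' Hx y y' Hy. rewrite !mulE. rewrite Hx, Hy. reflexivity.
Qed.

Global Instance inv_Proper : Proper (cong B I ==> cong B I) inv.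
Proof.
  intros x y H.
  assert (E : inv x = inv y * (y * inv x)) by (rewrite bmulA, bmulVl, bmul1l; reflexivity).
  rewrite E. transitivity (inv y * (x * inv x)).
  apply mul_cong_r. apply mul_Proper; [symmetry; exact H| reflexivity].
  rewrite bmulVr, one0, mul0r. reflexivity.
Qed.

Global Instance zmul_Proper k : Proper (cong B I ==> cong B I) (zm k).
Proof.
  intros x y H.
  assert (Hn : forall n, nm n x ≡ nm n y) by (induction n; simpl; [reflexivity| apply cong_add_Proper; auto]).
  destruct k; simpl; rewrite ?Hn; reflexivity.
Qed.

Lemma I_cong x y : x ≡ y -> I x -> I y.
Proof. intros H Hx. apply cong0. rewrite <- H. apply cong0; auto. Qed.

Lemma Izmul k x : I x -> I (zm k x).
Proof. intro H. apply cong0. apply cong0 in H. rewrite H, zmul_x0. reflexivity. Qed.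

Lemma cong_cancel_l a x y : a + x ≡ a + y -> x ≡ y.
Proof. intro H. rewrite <- (addKl a x), <- (addKl a y), H. reflexivity. Qed.

End Cong.

Section Main.
Variable B : brace.
Local Notation "x + y" := (@badd B x y) : br_scope.
Local Notation "- x" := (@bopp B x) : br_scope.
Local Notation "x * y" := (@bmul B x y) : br_scope.
Local Notation "0" := (@bzero B) : br_scope.
Local Open Scope br_scope.
Local Notation lam := (@lambda B).
Local Notation inv := (@binv B).
Local Notation nm := (@natmul B).
Local Notation zm := (@zmul B).
Variables I J : B -> Prop.
Hypothesis HI : is_ideal B I.
Hypothesis HJ : is_ideal B J.
Hypothesis HIJ : subset_of B I J.
Hypothesis cent : quot_central B I J.
Variable g : B.
Hypothesis Jg : J g.
Hypothesis gen : forall x, J x -> exists k : Z, cong B I x (zm k g).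
Hypothesis inf : ~ (exists s : list B, forall x, J x -> exists y, In y s /\ cong B I x y).
Local Notation "x ≡ y" := (cong B I x y) (at level 70).

Local Instance i1 : Equivalence (cong B I) := cong_Equiv HI.
Local Instance i2 : Proper (cong B I ==> cong B I ==> cong B I) (@badd B) := cong_add_Proper HI.
Local Instance i3 : Proper (cong B I ==> cong B I) (@bopp B) := cong_opp_Proper HI.
Local Instance i4 : Proper (cong B I ==> cong B I ==> cong B I) lam := lam_Proper HI.
Local Instance i5 : Proper (cong B I ==> cong B I ==> cong B I) (@bmul B) := mul_Proper HI.
Local Instance i6 : Proper (cong B I ==> cong B I) inv := inv_Proper HI.
Local Instance i7 k : Proper (cong B I ==> cong B I) (zm k) := zmul_Proper HI k.

Lemma Jcent x b : J x -> x + b ≡ b + x.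
Proof. intro H; apply cent; auto. Qed.
Lemma Jconj x b : J x -> - b + x + b ≡ x.
Proof. intro H. rewrite <- baddA, (Jcent b H), addKl. reflexivity. Qed.
Lemma zJ k : J (zm k g).
Proof. apply (Izmul HJ), Jg. Qed.

Lemma torsion k : I (zm k g) -> k = 0%Z.
Proof.
  intro Hk. destruct (Z.eq_dec k 0) as [|Hne]; auto. exfalso. apply inf.
  set (n := Z.abs k).
  assert (Hn : (0 < n)%Z) by (unfold n; lia).
  assert (HIn : I (zm n g)).
  { unfold n. destruct (Z.abs_eq_or_opp k) as [E|E]; rewrite E; auto.
    rewrite zmul_opp. apply (Iopp HI); auto. }
  exists (map (fun i => zm (Z.of_nat i) g) (seq 0 (Z.to_nat n))).
  intros x Hx. destruct (gen Hx) as [m Hm].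
  exists (zm (m mod n) g). split.
  - apply in_map_iff. exists (Z.to_nat (m mod n)). split.
    + rewrite Z2Nat.id; auto. apply Z.mod_pos_bound; auto.
    + apply in_seq. pose proof (Z.mod_pos_bound m n Hn). lia.
  - rewrite Hm. rewrite (Z.div_mod m n) at 1 by lia.
    rewrite zmul_add, Z.mul_comm, zmul_mul.
    assert (E : zm (m / n) (zm n g) ≡ 0) by (apply (cong0 I), (Izmul HI); auto).
    rewrite E, badd0l. reflexivity.
Qed.

Lemma zeq a b : zm a g ≡ zm b g -> a = b.
Proof.
  intro H. unfold cong in H. rewrite <- zmul_opp, <- zmul_add in H.
  apply torsion in H. lia.
Qed.

Lemma lam_g b : exists s, (s = 1 \/ s = -1)%Z /\ lam b g ≡ zm s g.
Proof.
  destruct (gen (Ilam HJ b Jg)) as [m Hm].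
  destruct (gen (Ilam HJ (inv b) Jg)) as [m' Hm'].
  exists m. split; auto.
  assert (E : g ≡ zm (m' * m) g).
  { rewrite <- (lam_inv_r b g) at 1. rewrite Hm', lam_zmul, Hm, zmul_mul. reflexivity. }
  rewrite <- zmul1 in E at 1. apply zeq in E.
  symmetry in E. rewrite Z.mul_comm in E. apply Z.eq_mul_1 in E. lia.
Qed.

Lemma J_cong x y : x ≡ y -> J x -> J y.
Proof.
  intros H Hx. unfold cong in H. apply HIJ in H.
  rewrite <- (addNKl x y). apply (Iadd HJ); auto.
  replace (- x + y) with (- (- y + x)) by (rewrite opp_add, oppK; reflexivity).
  apply (Iopp HJ); auto.
Qed.

Lemma fixA x : lam x g ≡ g -> forall y, J y -> lam x y ≡ y.
Proof.
  intros H y Hy. destruct (gen Hy) as [k Hk]. rewrite Hk, lam_zmul, H. reflexivity.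
Qed.

Definition K x := J x /\ lam x g ≡ g.

Lemma Kcong x y : x ≡ y -> K x -> K y.
Proof. intros H [H1 H2]. split. apply (J_cong H H1). rewrite <- H. auto. Qed.

Lemma K_inv x : K x -> inv x ≡ - x.
Proof.
  intros [H1 H2].
  assert (E : x + inv x ≡ 0).
  { rewrite <- (fixA H2 (Iinv HJ H1)). rewrite <- mulE, bmulVr, one0. reflexivity. }
  rewrite <- (addKl x (inv x)). rewrite E, badd0r. reflexivity.
Qed.

Lemma K0 : K 0.
Proof. split. apply (I0 HJ). rewrite lam_id0. reflexivity. Qed.

Lemma Kadd x y : K x -> K y -> K (x + y).
Proof.
  intros Kx Ky. destruct Kx as [Jx Hx]. destruct Ky as [Jy Hy].
  apply (@Kcong (x * y)).
  - rewrite mulE, (fixA Hx Jy). reflexivity.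
  - split. apply (Imul HJ); auto. rewrite lam_mul, Hy, Hx. reflexivity.
Qed.

Lemma Kopp x : K x -> K (- x).
Proof.
  intro Kx. apply (Kcong (K_inv Kx)). destruct Kx as [Jx Hx]. split.
  apply (Iinv HJ); auto.
  transitivity (lam (inv x) (lam x g)). apply lam_cong_r; auto. symmetry; auto.
  rewrite lam_inv_l. reflexivity.
Qed.

Lemma zclosed (P : B -> Prop) :
  (forall x y, x ≡ y -> P x -> P y) -> P 0 -> (forall x y, P x -> P y -> P (x + y)) ->
  (forall x, P x -> P (- x)) -> forall x k, P x -> P (zm k x).
Proof.
  intros Hc H0 Ha Ho x k Hx.
  assert (Hn : forall n, P (nm n x)) by (induction n; simpl; auto).
  destruct k; simpl; auto.
Qed.

Lemma Kzm x k : K x -> K (zm k x).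
Proof. intro Kx. apply zclosed; [intros u v H1 H2; exact (Kcong H1 H2) | apply K0 | apply Kadd | apply Kopp | exact Kx]. Qed.

Lemma exists_h : exists n, (n = 1 \/ n = 2)%Z /\ K (zm n g) /\
   forall x, K x -> exists j, x ≡ zm j (zm n g).
Proof.
  destruct (lam_g g) as [s [[-> | ->] Hs]].
  - exists 1%Z. rewrite zmul1. rewrite zmul1 in Hs. split; auto. split. split; auto.
    intros x [Jx _]. destruct (gen Jx) as [k Hk]. exists k. auto.
  - assert (Hneq : ~ K g).
    { intros [_ H]. rewrite Hs in H. rewrite <- (zmul1 g) in H at 2. apply zeq in H. lia. }
    assert (Hmg : lam (- g) g ≡ - g).
    { destruct (lam_g (- g)) as [s' [[-> | ->] Hs']].
      - exfalso. apply Hneq. rewrite <- (oppK g). apply Kopp. split.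
        apply (Iopp HJ); auto. rewrite Hs', zmul1. reflexivity.
      - rewrite Hs'. simpl. rewrite badd0r. reflexivity. }
    assert (K2 : K (zm 2 g)).
    { simpl. rewrite badd0r. apply (@Kcong (g * - g)).
      - rewrite mulE, lam_opp, Hs. simpl. rewrite badd0r, oppK. reflexivity.
      - split. apply (Imul HJ); auto. apply (Iopp HJ); auto.
        rewrite lam_mul, Hmg, lam_opp, Hs. simpl. rewrite badd0r, oppK. reflexivity. }
    exists 2%Z. split; auto. split; auto.
    intros x Kx. destruct Kx as [Jx Hx]. destruct (gen Jx) as [k Hk].
    destruct (Z.Even_or_Odd k) as [[j ->]|[j ->]].
    + exists j. rewrite <- zmul_mul, Z.mul_comm. auto.
    + exfalso. apply Hneq.
      apply (@Kcong (- zm (2 * j) g + x)).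
      * rewrite Hk, zmul_add, addKl, zmul1. reflexivity.
      * apply Kadd. apply Kopp. rewrite Z.mul_comm, zmul_mul. apply Kzm; auto. split; auto.
Qed.

Definition kap e x := e * x * inv e.

Lemma kap_cong e x y : x ≡ y -> kap e x ≡ kap e y.
Proof. intro H. unfold kap. rewrite H. reflexivity. Qed.
Lemma kap_mul e x y : kap e (x * y) = kap e x * kap e y.
Proof. unfold kap. rewrite !bmulA. rewrite <- (bmulA B (e * x) (inv e) e), bmulVl, bmul1r. reflexivity. Qed.
Lemma kap_inv e x : kap e (inv x) = inv (kap e x).
Proof. unfold kap. rewrite !inv_mul, invK, !bmulA. reflexivity. Qed.
Lemma kap_kap e x : kap (inv e) (kap e x) = x.
Proof. unfold kap. rewrite invK, !bmulA, bmulVl, bmul1l, <- bmulA, bmulVl, bmul1r. reflexivity. Qed.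
Lemma kap0 e : kap e 0 = 0.
Proof. unfold kap. rewrite mul0r, bmulVr, one0. reflexivity. Qed.
Lemma K_kap e x : K x -> K (kap e x).
Proof.
  intros [Jx Hx]. split. apply (Inmul HJ); auto.
  unfold kap. rewrite !lam_mul. rewrite (fixA Hx (Ilam HJ (inv e) Jg)). rewrite lam_inv_r. reflexivity.
Qed.
Lemma kap_add e u v : K u -> K v -> kap e (u + v) ≡ kap e u + kap e v.
Proof.
  intros Ku Kv.
  assert (E : u + v ≡ u * v) by (rewrite mulE, (fixA (proj2 Ku) (proj1 Kv)); reflexivity).
  rewrite (kap_cong e E), kap_mul, mulE.
  rewrite (fixA (proj2 (K_kap e Ku)) (proj1 (K_kap e Kv))). reflexivity.
Qed.
Lemma kap_opp e u : K u -> kap e (- u) ≡ - kap e u.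
Proof.
  intro Ku. rewrite <- (kap_cong e (K_inv Ku)), kap_inv, (K_inv (K_kap e Ku)). reflexivity.
Qed.
Lemma K_nm u m : K u -> K (nm m u).
Proof. intro Ku. induction m; simpl. apply K0. apply Kadd; auto. Qed.
Lemma kap_zm e u k : K u -> kap e (zm k u) ≡ zm k (kap e u).
Proof.
  intro Ku.
  assert (Hn : forall m, kap e (nm m u) ≡ nm m (kap e u)).
  { induction m; simpl. rewrite kap0. reflexivity.
    rewrite kap_add, IHm; auto using K_nm. reflexivity. }
  destruct k; simpl. rewrite kap0; reflexivity. apply Hn.
  rewrite kap_opp, Hn. reflexivity. apply K_nm; auto.
Qed.

Lemma conj_formula c x : J x -> kap c x ≡ lam c (x + (- inv c + lam x (inv c))).
Proof.
  intro Jx. unfold kap. rewrite <- bmulA, mulE, (mulE x), !lam_add, lam_opp.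
  assert (E : lam c (inv c) = - c).
  { apply add_inv_uniq. rewrite <- mulE, bmulVr, one0. reflexivity. }
  rewrite E, oppK, !baddA. rewrite (Jcent c (Ilam HJ c Jx)). reflexivity.
Qed.

Section WithH.
Variable n : Z.
Hypothesis Hn : (n = 1 \/ n = 2)%Z.
Hypothesis Kh : K (zm n g).
Hypothesis Kgen : forall x, K x -> exists j, x ≡ zm j (zm n g).
Local Notation h := (zm n g).

Lemma htors a b : zm a h ≡ zm b h -> a = b.
Proof. rewrite <- !zmul_mul. intro H. apply zeq in H. destruct Hn; subst; lia. Qed.

Lemma h_unit e : exists m, (m = 1 \/ m = -1)%Z /\ kap e h ≡ zm m h.
Proof.
  destruct (Kgen (K_kap e Kh)) as [m Hm].
  destruct (Kgen (K_kap (inv e) Kh)) as [m' Hm'].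
  exists m. split; auto.
  assert (E : zm 1 h ≡ zm (m * m') h).
  { rewrite zmul1. rewrite <- (kap_kap e h) at 1. rewrite (kap_cong (inv e) Hm).
    rewrite kap_zm by auto. rewrite Hm', zmul_mul. reflexivity. }
  apply htors in E. symmetry in E. apply Z.eq_mul_1 in E. exact E.
Qed.

Lemma lam_h d : exists s, (s = 1 \/ s = -1)%Z /\ lam d h ≡ zm s h.
Proof.
  destruct (lam_g d) as [s [Hs E]]. exists s. split; auto.
  rewrite lam_zmul, E, <- !zmul_mul, Z.mul_comm. reflexivity.
Qed.

Lemma h_delta d : exists e, (e = 0 \/ e = -2)%Z /\ - d + lam h d ≡ zm e h.
Proof.
  set (c := inv d).
  destruct (h_unit c) as [m [Hm Em]].
  destruct (lam_h d) as [s [Hs Es]].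
  pose proof (conj_formula c (proj1 Kh)) as F.
  unfold c in F. rewrite invK in F. fold c in F.
  rewrite Em in F.
  apply (lam_cong_r HI d) in F. unfold c in F. rewrite lam_inv_r, lam_zmul, Es, <- zmul_mul in F.
  exists (-1 + m * s)%Z. split. destruct Hm, Hs; subst; lia.
  rewrite zmul_add, F. replace (zm (-1) h) with (- h) by (simpl; rewrite badd0r; reflexivity).
  rewrite addKl. reflexivity.
Qed.

Lemma h_soc d : lam h d ≡ d.
Proof.
  destruct (h_delta d) as [e [He Ee]].
  destruct (h_delta (d + d)) as [e' [He' Ee']].
  assert (L : lam h d ≡ d + zm e h).
  { rewrite <- Ee, addNKl. reflexivity. }
  assert (Jw : J (zm e h)) by (apply (Izmul HJ); apply Kh).
  assert (E2 : zm e' h ≡ zm (e + e) h).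
  { rewrite <- Ee', lam_add, L, zmul_add.
    rewrite opp_add, <- !baddA, addKl, (baddA B (zm e h) d), (Jcent d Jw), <- baddA, addKl.
    reflexivity. }
  apply htors in E2. assert (e = 0%Z) by lia. subst e.
  rewrite L. simpl. rewrite badd0r. reflexivity.
Qed.

End WithH.

Lemma socle2 j b : lam (zm (2 * j) g) b ≡ b.
Proof.
  destruct exists_h as [n [Hn [Kh Kgen]]].
  set (P := fun x => J x /\ forall b, lam x b ≡ b).
  assert (KP : forall x, P x -> K x) by (intros x [Jx Hx]; split; auto).
  assert (Pz : forall k, P (zm k (zm n g))).
  { intro k. apply zclosed.
    - intros x y H [Jx Hx]. split. apply (J_cong H Jx). intro c. rewrite <- H. auto.
    - split. apply (I0 HJ). intro c. rewrite lam_id0. reflexivity.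
    - intros x y Px Py. apply (KP x) in Px as Kx. destruct Px as [Jx Hx]. destruct Py as [Jy Hy].
      split. apply (Iadd HJ); auto.
      intro c. assert (E : x + y ≡ x * y) by (rewrite mulE, (Hx y); reflexivity).
      rewrite E, lam_mul, Hy, Hx. reflexivity.
    - intros x Px. apply (KP x) in Px as Kx. destruct Px as [Jx Hx].
      split. apply (Iopp HJ); auto. intro c.
      rewrite <- (K_inv Kx).
      transitivity (lam (inv x) (lam x c)). apply lam_cong_r; auto. symmetry; auto.
      rewrite lam_inv_l. reflexivity.
    - split. apply Kh. apply h_soc; auto. }
  destruct Hn as [-> | ->].
  - rewrite <- (Z.mul_1_r (2 * j)), zmul_mul. apply Pz.
  - rewrite Z.mul_comm, zmul_mul. apply Pz.
Qed.

Definition I' x := J x /\ exists j, x ≡ zm (2 * j) g.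

Lemma I'_cong x y : x ≡ y -> I' x -> I' y.
Proof. intros H [Jx [j Hj]]. split. apply (J_cong H Jx). exists j. rewrite <- H. auto. Qed.

Lemma I'_soc x b : I' x -> lam x b ≡ b.
Proof. intros [_ [j Hj]]. rewrite Hj. apply socle2. Qed.

Lemma I'0 : I' 0.
Proof. split. apply (I0 HJ). exists 0%Z. reflexivity. Qed.

Lemma I'add x y : I' x -> I' y -> I' (x + y).
Proof.
  intros [Jx [j Hj]] [Jy [j' Hj']]. split. apply (Iadd HJ); auto.
  exists (j + j')%Z. rewrite Hj, Hj', Z.mul_add_distr_l, zmul_add. reflexivity.
Qed.

Lemma I'opp x : I' x -> I' (- x).
Proof.
  intros [Jx [j Hj]]. split. apply (Iopp HJ); auto.
  exists (- j)%Z. rewrite Hj, <- zmul_opp. f_equal. rewrite Z.mul_opp_r. reflexivity.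
Qed.

Lemma I'K x : I' x -> K x.
Proof. intro H. split. apply H. apply I'_soc; auto. Qed.

Lemma I'lam b x : I' x -> I' (lam b x).
Proof.
  intros [Jx [j Hj]]. split. apply (Ilam HJ); auto.
  destruct (lam_g b) as [s [_ Hs]].
  exists (j * s)%Z. rewrite Hj, lam_zmul, Hs, <- zmul_mul, Z.mul_assoc. reflexivity.
Qed.

Lemma I'_ideal : is_ideal B I'.
Proof.
  split; [apply I'0|]. split; [apply I'add|]. split; [apply I'opp|].
  split; [rewrite one0; apply I'0|].
  split.
  { intros x y Hx Hy. apply (@I'_cong (x + y)). rewrite mulE, (@I'_soc x y Hx). reflexivity.
    apply I'add; auto. }
  split.
  { intros x Hx. apply (@I'_cong (- x)). symmetry. apply K_inv, I'K; auto. apply I'opp; auto. }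
  split.
  { intros b x Hx. apply (@I'_cong x); auto. rewrite <- baddA, (Jcent (- b) (proj1 Hx)), addNKl.
    reflexivity. }
  split.
  { intros b x Hx. apply (@I'_cong (lam b x)). 2: apply I'lam; auto.
    fold (kap b x). rewrite (conj_formula b (proj1 Hx)), (@I'_soc x (inv b) Hx), baddNl, badd0r.
    reflexivity. }
  apply I'lam.
Qed.

Lemma I'_ic : quot_infinite_cyclic B I I'.
Proof.
  split.
  - exists (zm 2 g). split. split. apply zJ. exists 1%Z. reflexivity.
    intros x [_ [j Hj]]. exists j. rewrite Hj, <- zmul_mul, Z.mul_comm. reflexivity.
  - intros [s Hs]. apply inf. exists (s ++ map (fun y => y + g) s).
    intros x Jx. destruct (gen Jx) as [k Hk].
    destruct (Z.Even_or_Odd k) as [[j ->]|[j ->]].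
    + destruct (Hs x) as [y [Hy Ey]]. split; auto. exists j; auto.
      exists y. split; auto. apply in_or_app; auto.
    + destruct (Hs (zm (2 * j) g)) as [y [Hy Ey]]. split. apply zJ. exists j; reflexivity.
      exists (y + g). split. apply in_or_app. right. apply in_map_iff. exists y; auto.
      rewrite Hk, zmul_add, Ey, zmul1. reflexivity.
Qed.

Lemma I'_socle : quot_in_socle B I I'.
Proof.
  split. intros x b Hx. apply I'_soc; auto.
  intros x b Hx. apply Jcent, Hx.
Qed.

Lemma I'_prime : quot_prime_order B I' J.
Proof.
  exists [0; g]. split. apply prime_2. split.
  { intros y [<-|[<-|[]]]. apply (I0 HJ). apply Jg. }
  split.
  { constructor. constructor; [|constructor].
    intros [_ [j Hj]]. rewrite badd0r in Hj.
    replace (- g) with (zm (-1) g) in Hj by (simpl; rewrite badd0r; reflexivity).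
    apply zeq in Hj. lia.
    constructor; constructor. }
  intros x Jx. destruct (gen Jx) as [k Hk].
  destruct (Z.Even_or_Odd k) as [[j ->]|[j ->]].
  - exists 0. split. left; reflexivity. split. rewrite opp0, badd0l; auto.
    exists j. rewrite opp0, badd0l; auto.
  - exists g. split. right; left; reflexivity. split.
    apply (Iadd HJ); auto. apply (Iopp HJ); auto.
    exists j. rewrite Hk, zmul_add, zmul_comm, zmul1, addKl. reflexivity.
Qed.

Lemma I'_sub : subset_of B I I'.
Proof. intros x Hx. split. apply HIJ; auto. exists 0%Z. apply (cong0 I). auto. Qed.

Lemma I'_subJ : subset_of B I' J.
Proof. intros x Hx. apply Hx. Qed.

End Main.

Lemma refine (B : brace) (I J : B -> Prop) :
  is_ideal B I -> is_ideal B J -> subset_of B I J ->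
  quot_infinite_cyclic B I J -> quot_central B I J ->
  exists I2, is_ideal B I2 /\ subset_of B I I2 /\ subset_of B I2 J /\
    (quot_infinite_cyclic B I I2 /\ quot_in_socle B I I2) /\ quot_prime_order B I2 J.
Proof.
  intros HI HJ HIJ [[g [Jg gen]] inf] cent.
  exists (I' I J g). split. eapply I'_ideal; eassumption.
  split. intros x Hx. apply (I'_sub HIJ g Hx).
  split. intros x Hx. apply (I'_subJ Hx).
  split. split. eapply I'_ic; eassumption. eapply I'_socle; eassumption.
  eapply I'_prime; eassumption.
Qed.

Definition sstep {B : brace} (X Y : B -> Prop) :=
  (quot_infinite_cyclic B X Y /\ quot_in_socle B X Y) \/ quot_prime_order B X Y.

Definition good_chain {B : brace} N (K : nat -> B -> Prop) :=
  (forall x, K 0%nat x <-> x = bzero B) /\ (forall i, (i <= N)%nat -> is_ideal B (K i)) /\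
  (forall i, (i < N)%nat -> subset_of B (K i) (K (S i))) /\
  (forall i, (i < N)%nat -> sstep (K i) (K (S i))).

Lemma extend (B : brace) N K (Y : B -> Prop) :
  good_chain N K -> is_ideal B Y -> subset_of B (K N) Y -> sstep (K N) Y ->
  exists K', good_chain (S N) K' /\ K' (S N) = Y.
Proof.
  intros [H0 [Hid [Hsub Hst]]] HY HsY HstY.
  set (K' := fun i => if (i <=? N)%nat then K i else Y).
  assert (Kle : forall i, (i <= N)%nat -> K' i = K i).
  { intros i Hi. unfold K'. rewrite (proj2 (Nat.leb_le i N) Hi). reflexivity. }
  assert (Kgt : forall i, (N < i)%nat -> K' i = Y).
  { intros i Hi. unfold K'. rewrite (proj2 (Nat.leb_gt i N) Hi). reflexivity. }
  exists K'. split; [|apply Kgt; lia].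
  split; [|split; [|split]].
  - intro x. rewrite Kle by lia. apply H0.
  - intros i Hi. destruct (Nat.le_gt_cases i N). rewrite Kle; auto. rewrite Kgt; auto.
  - intros i Hi. rewrite Kle by lia. destruct (Nat.le_gt_cases (S i) N).
    rewrite Kle by auto. apply Hsub; lia.
    rewrite Kgt by lia. replace i with N by lia. auto.
  - intros i Hi. rewrite Kle by lia. destruct (Nat.le_gt_cases (S i) N).
    rewrite Kle by auto. apply Hst; lia.
    rewrite Kgt by lia. replace i with N by lia. auto.
Qed.

Lemma build (B : brace) n (Ic : nat -> B -> Prop) :
  ideal_chain B n Ic ->
  (forall i, (i < n)%nat ->
      (quot_infinite_cyclic B (Ic i) (Ic (S i)) /\ quot_central B (Ic i) (Ic (S i)))
      \/ quot_prime_order B (Ic i) (Ic (S i))) ->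
  forall m, (m <= n)%nat -> exists N K, good_chain N K /\ K N = Ic m.
Proof.
  intros [C0 [Cn [Cid Csub]]] Hs m. induction m as [|m IH]; intro Hm.
  - exists 0%nat, (fun _ => Ic 0%nat). split; auto.
    split; [|split; [|split]].
    + apply C0.
    + intros i Hi. apply Cid. lia.
    + intros; lia.
    + intros; lia.
  - destruct (IH ltac:(lia)) as [N [K [HK KN]]].
    destruct (Hs m ltac:(lia)) as [[Hic Hc]|Hp].
    + destruct (refine (Cid m ltac:(lia)) (Cid (S m) ltac:(lia)) (Csub m ltac:(lia)) Hic Hc)
        as [I2 [HI2 [S1 [S2 [St1 St2]]]]].
      destruct (@extend B N K I2 HK HI2) as [K1 [HK1 K1N]].
      rewrite KN; auto. rewrite KN; left; auto.
      destruct (@extend B (S N) K1 (Ic (S m)) HK1) as [K2 [HK2 K2N]].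
      apply Cid; lia. rewrite K1N; auto. rewrite K1N; right; auto.
      exists (S (S N)), K2. auto.
    + destruct (@extend B N K (Ic (S m)) HK) as [K1 [HK1 K1N]].
      apply Cid; lia. rewrite KN; apply Csub; lia. rewrite KN; right; auto.
      exists (S N), K1. auto.
Qed.

Theorem theorem3p17 (B : brace) : weakly_supersoluble B <-> supersoluble B.
Proof.
  split.
  - intros [n [Ic [HC Hs]]].
    destruct (build HC Hs (le_n n)) as [N [K [[H0 [Hid [Hsub Hst]]] KN]]].
    exists N, K. split.
    + split; [|split; [|split]]; auto.
      intro x. rewrite KN. apply HC.
    + intros i Hi. apply Hst; auto.
  - intros [n [Ic [HC Hs]]]. exists n, Ic. split; auto.
    intros i Hi. destruct (Hs i Hi) as [[H1 [_ H2]]|H]; auto.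
Qed.
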